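(* Let $\mathcal B_1$ be an arbitrary set of mini-batches and let $f\in\mathcal F$ be a file with $(f,f)\in\mathcal B_1$. If $$n(f)\Bigl(l(f)+\sum_{b\in\mathcal B_1,\ l(b)<l(f)}s(b)\Bigr) < s(f)\Bigl(\sum_{f'\in\mathcal F,\ l(f')<l(f)}n(f')+\sum_{f'\in\mathcal F\setminus\mathcal F(\mathcal B_1),\ l(f')>l(f)}n(f')\Bigr),$$ then $v(\mathcal B_1\setminus\{(f,f)\})<v(\mathcal B_1)$.
   Context: A single-track tape stores a sequence of files $\mathcal F=(f_1,\dots,f_n)$ laid out contiguously from left to right: file $f$ occupies blocks $l(f),\dots,r(f)$, has size $s(f)=r(f)-l(f)+1$, $l(f_1)=1$, $l(f_{i+1})=r(f_i)+1$, and $m=\sum_f s(f)$. The tape moves one block per time step; at time $0$ the head is at position $m$. A file is read when the head traverses it rightwards from $l(f)$ to $r(f)$. $\mathcal R$ is a finite set of requests, all released at time $0$, each associated with a file; $n(f)$ is the number of requests for $f$. A request's response time is the time at which the head starts a rightward reading traversal of its file (all pending requests of a file are serviced simultaneously). A mini-batch is a pair $b=(f,f')$ of files with $l(f)\le l(f')$; $l(b)=l(f)$, $r(b)=r(f')$, $s(b)=r(b)-l(b)+1$, $\mathcal F(b)$ is the set of files $g$ with $l(b)\le l(g)$, $r(g)\le r(b)$, and $\mathcal F(\mathcal B_1)=\bigcup_{b\in\mathcal B_1}\mathcal F(b)$. Given a set $\mathcal B_1$ of mini-batches, its schedule is: Phase 1, the head moves leftwards from $m$ to $1$, and upon reaching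 $l(b)$ for $b\in\mathcal B_1$ executes $b$ (moves rightwards to $r(b)$, reading all files of $\mathcal F(b)$, and returns to $l(b)$), then continues leftwards; Phase 2, the head moves rightwards from $1$ to $m$ reading every file. $v(\mathcal B_1)$ is the total response time of this schedule. *)

(* Defs.v *)
From mathcomp Require Import all_boot.
Set Implicit Arguments. Unset Strict Implicit. Unset Printing Implicit Defensive.

(* Files are indexed by 'I_n (left to right); s i is the size of file i.     *)
Definition lpos (n : nat) (s : 'I_n -> nat) (i : 'I_n) : nat :=
  1 + \sum_(j < n | j < i) s j.
Definition rpos (n : nat) (s : 'I_n -> nat) (i : 'I_n) : nat :=
  lpos s i + s i - 1.
Definition tape_len (n : nat) (s : 'I_n -> nat) : nat := \sum_(j < n) s j.

Definition bl (n : nat) (s : 'I_n -> nat) (b : 'I_n * 'I_n) := lpos s b.1.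
Definition br (n : nat) (s : 'I_n -> nat) (b : 'I_n * 'I_n) := rpos s b.2.
Definition bsize (n : nat) (s : 'I_n -> nat) (b : 'I_n * 'I_n) :=
  br s b - bl s b + 1.

Definition inb (n : nat) (s : 'I_n -> nat) (b : 'I_n * 'I_n) (g : 'I_n) : bool :=
  (bl s b <= lpos s g) && (rpos s g <= br s b).
Definition inFB (n : nat) (s : 'I_n -> nat) (B : {set 'I_n * 'I_n}) (g : 'I_n) :=
  [exists b in B, inb s b g].

(* Time conventions: block k occupies the tape segment [k-1, k]; the head is  *)
(* at coordinate m at time 0 and moves one unit per time step.  Traversing a  *)
(* file of size s rightwards takes s steps, so executing a mini-batch b costs *)
(* 2 s(b) time units.  Mini-batches with the same left end are executed in   *)
(* increasing order of their right ends.                                       *)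
Definition exec_before (n : nat) (s : 'I_n -> nat) (b' b : 'I_n * 'I_n) : bool :=
  (bl s b < bl s b') || ((bl s b' == bl s b) && (br s b' < br s b)).

(* time at which the execution of b starts (head at left boundary of l(b)) *)
Definition bstart (n : nat) (s : 'I_n -> nat) (B : {set 'I_n * 'I_n})
  (b : 'I_n * 'I_n) : nat :=
  (tape_len s - (bl s b - 1)) +
  \sum_(b' in B | exec_before s b' b) 2 * bsize s b'.

(* time at which Phase 2 starts reading g *)
Definition phase2_time (n : nat) (s : 'I_n -> nat) (B : {set 'I_n * 'I_n})
  (g : 'I_n) : nat :=
  tape_len s + \sum_(b in B) 2 * bsize s b + (lpos s g - 1).

(* response time of (the requests for) file g: first start of a rightward  *)
(* reading traversal of g in the schedule of B                              *)
Definition resp (n : nat) (s : 'I_n -> nat) (B : {set 'I_n * 'I_n})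
  (g : 'I_n) : nat :=
  \big[minn/phase2_time s B g]_(b in B | inb s b g)
     (bstart s B b + (lpos s g - bl s b)).

(* v(B1): total response time of the requests R; req r is the file of r *)
Definition total_resp (n : nat) (s : 'I_n -> nat) (R : finType)
  (req : R -> 'I_n) (B : {set 'I_n * 'I_n}) : nat :=
  \sum_(r : R) resp s B (req r).

Definition nreq (n : nat) (R : finType) (req : R -> 'I_n) (f : 'I_n) : nat :=
  #|[set r | req r == f]|.

(* Main.v *)
Require Import Defs.
From mathcomp Require Import all_boot zify.

Lemma subsum (I : finType) (P Q : pred I) (F : I -> nat) :
  (forall i, P i -> Q i) -> \sum_(i | P i) F i <= \sum_(i | Q i) F i.
Proof.
move=> PQ; rewrite [X in X <= _]big_mkcond [X in _ <= X]big_mkcond /=.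
apply: leq_sum => i _; case: (boolP (P i)) => Pi; first by rewrite PQ.
by case: (Q i).
Qed.

Lemma bigmin_shift (I : finType) (P : pred I) (F1 F2 : I -> nat) x1 x2 c :
  x1 = x2 + c -> (forall i, P i -> F1 i = F2 i + c) ->
  \big[minn/x1]_(i | P i) F1 i = \big[minn/x2]_(i | P i) F2 i + c.
Proof.
move=> Hx HF; apply: (@big_rec2 nat nat (fun y1 y2 => y1 = y2 + c)) => // i y1 y2 Pi ->.
rewrite HF //; lia.
Qed.

Lemma bigmin_mono (I : finType) (P : pred I) (F1 F2 : I -> nat) x1 x2 :
  x2 <= x1 -> (forall i, P i -> F2 i <= F1 i) ->
  \big[minn/x2]_(i | P i) F2 i <= \big[minn/x1]_(i | P i) F1 i.
Proof.
move=> Hx HF; apply: (@big_rec2 nat nat (fun y2 y1 => y2 <= y1)) => // i y2 y1 Pi H.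
have := HF i Pi; lia.
Qed.

Lemma bigmin_geq (I : finType) (P : pred I) (F : I -> nat) x A :
  A <= x -> (forall i, P i -> A <= F i) -> A <= \big[minn/x]_(i | P i) F i.
Proof.
move=> Hx HF; apply: (big_ind (fun y => A <= y)) => // a b; lia.
Qed.

Lemma bigmin_le_idx (I : finType) (P : pred I) (F : I -> nat) x :
  \big[minn/x]_(i | P i) F i <= x.
Proof. by apply: (big_rec (fun y => y <= x)) => // i y _ H; lia. Qed.

Lemma bigmin_le_term (I : finType) (P : pred I) (F : I -> nat) x i :
  P i -> \big[minn/x]_(i | P i) F i <= F i.
Proof.
move=> Pi; rewrite unlock /index_enum; have : i \in (Finite.enum I) by rewrite -enumT mem_enum.
elim: (Finite.enum I) => //= a r IH; rewrite inE => /orP [/eqP <-|ir].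
  rewrite Pi; exact: geq_minl.
case: (P a); last exact: IH.
have := IH ir; lia.
Qed.

Lemma sum_req (n : nat) (R : finType) (req : R -> 'I_n) (F : 'I_n -> nat) :
  \sum_(r : R) F (req r) = \sum_(g : 'I_n) nreq req g * F g.
Proof.
rewrite (partition_big req predT) //=; apply: eq_bigr => g _.
rewrite /nreq -sum1_card big_distrl /=.
rewrite [in RHS](eq_bigl (fun r => req r == g)); last by move=> r; rewrite inE.
by apply: eq_bigr => r /eqP <-; rewrite mul1n.
Qed.

Lemma sumD1 (T : finType) (B : {set T}) (x : T) (P : pred T) (F : T -> nat) :
  x \in B -> \sum_(b in B | P b) F b = (if P x then F x else 0) + \sum_(b in B :\ x | P b) F b.
Proof. by move=> Hx; rewrite !big_mkcondr (big_setD1 _ Hx). Qed.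

Section Core.
Variables (n : nat) (s : 'I_n -> nat) (Hs : forall i, 0 < s i).

Lemma lpos_lt (i j : 'I_n) : i < j -> lpos s i + s i <= lpos s j.
Proof.
move=> ij; rewrite /lpos (bigD1 i ij) /=.
have : \sum_(k < n | k < i) s k <= \sum_(k < n | (k < j) && (k != i)) s k.
  apply: subsum => k ki; rewrite (ltn_trans ki ij) /=; apply/eqP => E; by rewrite E ltnn in ki.
move=> HH; rewrite addnCA addnC !leq_add2l; exact: HH.
Qed.

Lemma lpos_ltP (i j : 'I_n) : (lpos s i < lpos s j) = (i < j).
Proof.
case: (ltngtP i j) => h.
- have := lpos_lt _ _ h; have := Hs i; lia.
- have := lpos_lt _ _ h; have := Hs j; lia.
- by rewrite (ord_inj h) ltnn.
Qed.

Lemma lpos_inj (i j : 'I_n) : lpos s i = lpos s j -> i = j.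
Proof.
move=> E; case: (ltngtP i j) => h; last exact: ord_inj.
- have := lpos_lt _ _ h; have := Hs i; lia.
- have := lpos_lt _ _ h; have := Hs j; lia.
Qed.

Lemma lpos_ge1 (i : 'I_n) : 1 <= lpos s i.
Proof. by rewrite /lpos. Qed.

Lemma rpos_mono (i j : 'I_n) : lpos s i <= lpos s j -> rpos s i <= rpos s j.
Proof.
rewrite /rpos leq_eqVlt => /orP [/eqP E|h].
  by rewrite (lpos_inj _ _ E).
have := h; rewrite lpos_ltP => /lpos_lt; have := Hs j; lia.
Qed.

Lemma lpos_m (i : 'I_n) : lpos s i + s i <= tape_len s + 1.
Proof.
rewrite /lpos /tape_len [in X in _ <= X + 1](bigD1 i) //=.
have : \sum_(k < n | k < i) s k <= \sum_(k < n | k != i) s k.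
  apply: subsum => k ki /=; apply/eqP => E; by rewrite E ltnn in ki.
move: (\sum_(k < n | k < i) s k) (\sum_(k < n | k != i) s k) => X Y; lia.
Qed.

Variables (R : finType) (req : R -> 'I_n) (B : {set 'I_n * 'I_n})
  (HB : forall b, b \in B -> lpos s b.1 <= lpos s b.2)
  (f : 'I_n) (Hf : (f, f) \in B).

Local Notation ff := (f, f).
Local Notation B' := (B :\ (f, f)).

Lemma bsize_ff : bsize s ff = s f.
Proof. rewrite /bsize /br /bl /rpos /=; have := Hs f; lia. Qed.

Lemma inb_ff g : inb s ff g = (g == f).
Proof.
apply/idP/eqP => [|->]; last by rewrite /inb /bl /br /= leqnn /=.
rewrite /inb /bl /br /= => /andP [h1 h2]; apply: lpos_inj.
move: h1; rewrite leq_eqVlt => /orP [/eqP -> //|h].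
have := h; rewrite lpos_ltP => /lpos_lt; move: h2; rewrite /rpos.
have := Hs g; have := Hs f; lia.
Qed.

Lemma phase2_D g : phase2_time s B g = phase2_time s B' g + 2 * s f.
Proof. rewrite /phase2_time (big_setD1 _ Hf) /= bsize_ff. move: (\sum_(b in B :\ (f, f)) 2 * bsize s b) => X; lia. Qed.

Lemma bstart_D b : bstart s B b = bstart s B' b + (if exec_before s ff b then 2 * s f else 0).
Proof.
rewrite /bstart (@sumD1 _ B ff (fun b' => exec_before s b' b) (fun b' => 2 * bsize s b') Hf).
rewrite bsize_ff; move: (\sum_(b' in B :\ (f, f) | exec_before s b' b) 2 * bsize s b') => X; case: ifP; lia.
Qed.

Lemma inB' b : (b \in B') = (b != ff) && (b \in B).
Proof. by rewrite in_setD1. Qed.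

Lemma idx_eq g : g != f -> (fun b => (b \in B') && inb s b g) =1 (fun b => (b \in B) && inb s b g).
Proof.
move=> gf b; rewrite inB'; case: (eqVneq b ff) => [->|] //=.
by rewrite inb_ff (negbTE gf) andbF.
Qed.

Lemma resp_le g : g != f -> resp s B' g <= resp s B g.
Proof.
move=> gf; rewrite /resp (eq_bigl _ _ (idx_eq _ gf)).
apply: bigmin_mono; first by rewrite phase2_D; lia.
by move=> b _; rewrite bstart_D; lia.
Qed.

Lemma resp_shift g : (lpos s g < lpos s f) || ~~ inFB s B g ->
  resp s B g = resp s B' g + 2 * s f.
Proof.
move=> H.
have gf : g != f.
  apply/eqP => E; move: H; rewrite E ltnn /= /inFB; case/negP.
  by apply/existsP; exists ff; rewrite Hf inb_ff eqxx.
rewrite /resp (eq_bigl _ _ (idx_eq _ gf)).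
apply: bigmin_shift; first exact: phase2_D.
move=> b /andP [bB hb]; rewrite bstart_D.
case/orP: H => H.
- have -> : exec_before s ff b.
    move: hb; rewrite /exec_before /inb /bl /br /=; lia.
  lia.
- exfalso; move/negP: H; apply; apply/existsP; exists b; by rewrite bB.
Qed.

Definition Ssum := \sum_(b in B | bl s b < lpos s f) bsize s b.

Lemma resp_f : resp s B' f <= resp s B f + 2 * (lpos s f - 1 + Ssum).
Proof.
have HA : tape_len s - (lpos s f - 1) + \sum_(b' in B | exec_before s b' ff) 2 * bsize s b'
          <= resp s B f.
  rewrite /resp; apply: bigmin_geq.
    rewrite /phase2_time.
    have : \sum_(b' in B | exec_before s b' ff) 2 * bsize s b' <= \sum_(b in B) 2 * bsize s b.
      by apply: subsum => b /andP[].
    move: (\sum_(b' in B | exec_before s b' ff) 2 * bsize s b') (\sum_(b in B) 2 * bsize s b) => X Y.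
    lia.
  move=> b /andP [bB hb]; rewrite /bstart.
  have : \sum_(b' in B | exec_before s b' ff) 2 * bsize s b'
         <= \sum_(b' in B | exec_before s b' b) 2 * bsize s b'.
    apply: subsum => b' /andP [-> e] /=; move: e hb; rewrite /exec_before /inb /bl /br /=; lia.
  have : bl s b <= lpos s f by move: hb; rewrite /inb => /andP[].
  move: (\sum_(b' in B | exec_before s b' ff) 2 * bsize s b')
        (\sum_(b' in B | exec_before s b' b) 2 * bsize s b') => X Y.
  lia.
have Hsub : \sum_(b' in B :\ (f, f) | exec_before s b' ff) 2 * bsize s b'
            <= \sum_(b' in B | exec_before s b' ff) 2 * bsize s b'.
  rewrite (@sumD1 _ B ff (fun b' => exec_before s b' ff) (fun b' => 2 * bsize s b') Hf).
  exact: leq_addl.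
case: (boolP [exists b, (b \in B) && (b != ff) && (bl s b == lpos s f)]).
  move/existsP => [b0 Pb0].
  case: (@arg_minnP _ b0 (fun b => (b \in B) && (b != ff) && (bl s b == lpos s f)) (br s) Pb0).
  move=> bm /andP [/andP [bmB bmn] /eqP bml] Hmin.
  have hin : inb s bm f.
    rewrite /inb /br bml leqnn /=; apply: rpos_mono; move: bml; rewrite /bl => <-; exact: HB.
  have H1 : resp s B' f <= bstart s B' bm + (lpos s f - bl s bm).
    rewrite /resp; apply: bigmin_le_term; by rewrite inB' bmn bmB hin.
  have H2 : \sum_(b' in B :\ (f, f) | exec_before s b' bm) 2 * bsize s b'
            <= \sum_(b' in B :\ (f, f) | exec_before s b' ff) 2 * bsize s b'.
    apply: subsum => b' /andP [hb' e]; rewrite hb' /=.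
    move: hb'; rewrite inB' => /andP [b'n b'B].
    case: (eqVneq (bl s b') (lpos s f)) => E.
      have := Hmin b'; rewrite b'B b'n E eqxx => /(_ isT).
      move: e E bml; rewrite /exec_before /bl /br /=; lia.
    move: e E bml; rewrite /exec_before /bl /br /=; lia.
  move: H1 H2 Hsub HA; rewrite /bstart bml.
  move: (\sum_(b' in B :\ (f, f) | exec_before s b' bm) 2 * bsize s b')
        (\sum_(b' in B :\ (f, f) | exec_before s b' ff) 2 * bsize s b')
        (\sum_(b' in B | exec_before s b' ff) 2 * bsize s b') => X Y Z.
  lia.
move=> Hne.
have H1 : resp s B' f <= phase2_time s B' f by apply: bigmin_le_idx.
have H2 : \sum_(b in B :\ (f, f)) 2 * bsize s b <=
   \sum_(b in B :\ (f, f) | exec_before s b ff) 2 * bsize s b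
   + \sum_(b in B :\ (f, f) | bl s b < lpos s f) 2 * bsize s b.
  rewrite !big_mkcondr -big_split /=.
  apply: leq_sum => b; rewrite inB' => /andP [bn bB].
  have : bl s b != lpos s f.
    apply/negP => E; move/negP: Hne; apply; apply/existsP; exists b; by rewrite bB bn E.
  rewrite /exec_before /bl /br /=; case: ifP; case: ifP; lia.
have H3 : \sum_(b in B :\ (f, f) | bl s b < lpos s f) 2 * bsize s b <= 2 * Ssum.
  rewrite /Ssum big_distrr /=.
  rewrite (@sumD1 _ B ff (fun b' => bl s b' < lpos s f) (fun b' => 2 * bsize s b') Hf).
  exact: leq_addl.
have H4 := lpos_m f.
move: H1 H2 H3 H4 Hsub HA; rewrite /phase2_time.
move: (\sum_(b in B :\ (f, f)) 2 * bsize s b)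
      (\sum_(b in B :\ (f, f) | exec_before s b ff) 2 * bsize s b)
      (\sum_(b in B :\ (f, f) | bl s b < lpos s f) 2 * bsize s b)
      (\sum_(b' in B | exec_before s b' ff) 2 * bsize s b') => X Y Z W.
lia.
Qed.

End Core.

Theorem corollary4 (n : nat) (s : 'I_n -> nat) (Hs : forall i, 0 < s i)
  (R : finType) (req : R -> 'I_n) (B : {set 'I_n * 'I_n})
  (HB : forall b, b \in B -> lpos s b.1 <= lpos s b.2)
  (f : 'I_n) (Hf : (f, f) \in B) :
  nreq req f * (lpos s f + \sum_(b in B | bl s b < lpos s f) bsize s b)
  < s f * (\sum_(g : 'I_n | lpos s g < lpos s f) nreq req g
           + \sum_(g : 'I_n | ~~ inFB s B g && (lpos s f < lpos s g)) nreq req g) ->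
  total_resp s req (B :\ (f, f)) < total_resp s req B.
Proof.
move=> H.
pose G g := (lpos s g < lpos s f) || (~~ inFB s B g && (lpos s f < lpos s g)).
pose K := 2 * (lpos s f - 1 + Ssum n s B f).
have key : forall g, resp s (B :\ (f, f)) g + (if G g then 2 * s f else 0)
                     <= resp s B g + (if g == f then K else 0).
  move=> g; case: (eqVneq g f) => [->|gf].
    rewrite /G ltnn andbF /= ?eqxx addn0; exact: (@resp_f _ _ Hs _ HB _ Hf).
  rewrite addn0; case: ifP => HG.
    rewrite (@resp_shift _ _ Hs _ _ Hf) //.
    by move: HG => /orP [->//|/andP [-> _]]; rewrite orbT.
  rewrite addn0; exact: (@resp_le _ _ Hs _ _ Hf).
have Hsum : \sum_(r : R) (resp s (B :\ (f, f)) (req r) + (if G (req r) then 2 * s f else 0))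
            <= \sum_(r : R) (resp s B (req r) + (if req r == f then K else 0)).
  by apply: leq_sum => r _; apply: key.
rewrite !big_split /= in Hsum.
rewrite (@sum_req _ _ req (fun g => if G g then 2 * s f else 0)) in Hsum.
rewrite (@sum_req _ _ req (fun g => if g == f then K else 0)) in Hsum.
have E1 : \sum_g nreq req g * (if G g then 2 * s f else 0) =
   2 * s f * (\sum_(g : 'I_n | lpos s g < lpos s f) nreq req g
           + \sum_(g : 'I_n | ~~ inFB s B g && (lpos s f < lpos s g)) nreq req g).
  rewrite (big_mkcond (fun g : 'I_n => lpos s g < lpos s f))
          (big_mkcond (fun g : 'I_n => ~~ inFB s B g && (lpos s f < lpos s g))).
  rewrite -big_split big_distrr /=; apply: eq_bigr => g _; rewrite /G.
  case: ifP; case: ifP; case: ifP; lia.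
have E2 : \sum_g nreq req g * (if g == f then K else 0) = nreq req f * K.
  rewrite (bigD1 f) //= eqxx big1 ?addn0 // => g /negbTE ->; exact: muln0.
rewrite E1 E2 in Hsum.
move: H Hsum; rewrite /total_resp /K /Ssum.
move: (\sum_(g : 'I_n | lpos s g < lpos s f) nreq req g
           + \sum_(g : 'I_n | ~~ inFB s B g && (lpos s f < lpos s g)) nreq req g) => N.
move: (\sum_(b in B | bl s b < lpos s f) bsize s b) => S.
move: (\sum_(r : R) resp s (B :\ (f, f)) (req r)) (\sum_(r : R) resp s B (req r)) => X Y.
move: (nreq req f) (lpos s f) (s f) => a l c.
nia.
Qed.
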